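(* Let $(M,d)$ be a metric space having an accumulation point, and let $0<c<1$. Then there exists a distance $\overline d$ on $M$ with $c\,d\leq\overline d\leq d$ such that the Weak Besicovitch Covering Property (and hence BCP) does not hold for $\overline d$.
   Context: Balls are closed, $B_d(p,r)=\{q:d(q,p)\le r\}$, with fixed center and radius. A family of Besicovitch balls is a finite family $\{B_d(x_B,r_B)\}$ of balls such that $x_B\notin B'$ for all distinct $B,B'$ in the family and the intersection of all its balls is nonempty. w-BCP holds for $d$ if there is an integer $N\ge1$ such that every family of Besicovitch balls has cardinality at most $N$. BCP holds for $d$ if there is $N\geq1$ such that for every bounded $A\subset M$ and every family $\mathcal B$ of balls such that each point of $A$ is the center of some ball of $\mathcal B$, there is a subfamily $\mathcal F\subset\mathcal B$ with $\chi_A\leq\sum_{B\in\mathcal F}\chi_B\leq N$. *)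

(* Defs.v *)
From Stdlib Require Import Reals List.
Open Scope R_scope.

Definition is_metric {M : Type} (d : M -> M -> R) : Prop :=
  (forall x y, 0 <= d x y) /\
  (forall x y, d x y = 0 <-> x = y) /\
  (forall x y, d x y = d y x) /\
  (forall x y z, d x z <= d x y + d y z).

Definition accumulation_point {M : Type} (d : M -> M -> R) (p : M) : Prop :=
  forall eps, 0 < eps -> exists q, q <> p /\ d q p < eps.

(* A ball is given by its center and radius (fixed center and radius);
   closed ball B_d(x,r) = {q : d q x <= r}. Radii are positive. *)
Definition ball (M : Type) : Type := (M * R)%type.

Definition in_ball {M : Type} (d : M -> M -> R) (B : ball M) (q : M) : Prop :=
  d q (fst B) <= snd B.

Definition besicovitch_family {M : Type} (d : M -> M -> R) (F : list (ball M)) : Prop :=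
  NoDup F /\
  (forall B, In B F -> 0 < snd B) /\
  (forall B B', In B F -> In B' F -> B <> B' -> ~ in_ball d B' (fst B)) /\
  (exists z, forall B, In B F -> in_ball d B z).

Definition wBCP {M : Type} (d : M -> M -> R) : Prop :=
  exists N : nat, (1 <= N)%nat /\
    forall F, besicovitch_family d F -> (length F <= N)%nat.

(* A (possibly infinite) family of balls is a
   predicate on balls.  The condition  sum_{B in F} chi_B <= N  is stated as:
   every point belongs to at most N distinct balls of F. *)
Definition BCP {M : Type} (d : M -> M -> R) : Prop :=
  exists N : nat, (1 <= N)%nat /\
    forall (A : M -> Prop) (Fam : ball M -> Prop),
      (exists p Rad, forall a, A a -> d a p <= Rad) ->
      (forall B, Fam B -> 0 < snd B) ->
      (forall a, A a -> exists r, Fam (a, r)) ->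
      exists Sub : ball M -> Prop,
        (forall B, Sub B -> Fam B) /\
        (forall a, A a -> exists B, Sub B /\ in_ball d B a) /\
        (forall x (l : list (ball M)), NoDup l ->
           (forall B, In B l -> Sub B /\ in_ball d B x) -> (length l <= N)%nat).

(* Main.v *)
Require Import Defs.
From Stdlib Require Import Reals List Lra Psatz FinFun Classical.
Open Scope R_scope.

Lemma fin_min {M : Type} (f : M -> R) (l : list M) :
  (forall q, In q l -> 0 < f q) -> exists eps, 0 < eps /\ forall q, In q l -> eps <= f q.
Proof.
  induction l as [|a l IH]; intros H.
  - exists 1; split; [lra| intros q []].
  - destruct IH as [e [He He']]. { intros q Hq; apply H; right; exact Hq. }
    assert (Ha : 0 < f a) by (apply H; left; reflexivity).
    exists (Rmin e (f a)); split.
    + apply Rmin_glb_lt; assumption.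
    + intros q [<-|Hq]. apply Rmin_r. eapply Rle_trans; [apply Rmin_l| apply He'; exact Hq].
Qed.

Lemma fin_max {M : Type} (f : M -> R) (l : list M) :
  exists R0, forall q, In q l -> f q <= R0.
Proof.
  induction l as [|a l IH].
  - exists 0; intros q [].
  - destruct IH as [R0 H]. exists (Rmax R0 (f a)).
    intros q [<-|Hq]. apply Rmax_r. eapply Rle_trans; [apply H; exact Hq| apply Rmax_l].
Qed.

Theorem theorem1p3 (M : Type) (d : M -> M -> R) (c : R) :
  is_metric d ->
  (exists p, accumulation_point d p) ->
  0 < c < 1 ->
  exists dbar : M -> M -> R,
    is_metric dbar /\
    (forall x y, c * d x y <= dbar x y /\ dbar x y <= d x y) /\
    ~ wBCP dbar /\ ~ BCP dbar.
Proof.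
  intros [Hpos [Hzero [Hsym Htri]]] [p Hacc] Hc.
  set (dbar := fun x y => Rmin (d x y) (c * (d x p + d y p))).
  assert (Hdd : forall x, d x x = 0) by (intro x; apply Hzero; reflexivity).
  assert (Hmet : is_metric dbar).
  { split; [|split; [|split]].
    - intros x y; unfold dbar; apply Rmin_glb; [apply Hpos|].
      pose proof (Hpos x p); pose proof (Hpos y p); nra.
    - intros x y; unfold dbar; split.
      + unfold Rmin; destruct (Rle_dec _ _) as [h|h]; intro E.
        * apply Hzero; exact E.
        * pose proof (Hpos x p); pose proof (Hpos y p).
          assert (d x p = 0) by nra. assert (d y p = 0) by nra.
          apply Hzero in H1; apply Hzero in H2; congruence.
      + intros <-. rewrite Hdd. unfold Rmin; destruct (Rle_dec _ _); [reflexivity|].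
        pose proof (Hpos x p); nra.
    - intros x y; unfold dbar; rewrite (Hsym x y), (Rplus_comm (d x p)); reflexivity.
    - intros x y z; unfold dbar.
      pose proof (Htri x y z). pose proof (Htri x y p). pose proof (Htri z y p).
      pose proof (Hsym z y). pose proof (Hpos x y). pose proof (Hpos y z).
      pose proof (Hpos x p). pose proof (Hpos y p). pose proof (Hpos z p).
      unfold Rmin; repeat destruct (Rle_dec _ _); nra. }
  assert (Hbnd : forall x y, c * d x y <= dbar x y /\ dbar x y <= d x y).
  { intros x y; split; [|apply Rmin_l]. unfold dbar; apply Rmin_glb.
    - pose proof (Hpos x y); nra.
    - pose proof (Htri x p y). rewrite (Hsym p y) in H. nra. }
  assert (Hfam : forall n, exists l : list M, length l = n /\ NoDup l /\
            (forall q, In q l -> q <> p) /\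
            (forall q q', In q l -> In q' l -> q <> q' -> c * d q' p < d q q')).
  { induction n as [|n IH].
    - exists nil; repeat split; try constructor; intros q; simpl; tauto.
    - destruct IH as [l [Hlen [Hnd [Hnp Hsep]]]].
      destruct (fin_min (fun q => (1 - c) * d q p) l) as [e [He He']].
      { intros q Hq. assert (0 < d q p).
        { destruct (Hpos q p) as [h|h]; [exact h|]. exfalso; apply (Hnp q Hq); apply Hzero; auto. }
        nra. }
      destruct (Hacc e He) as [q0 [Hq0 Hq0e]].
      assert (Hr0 : 0 < d q0 p).
      { destruct (Hpos q0 p) as [h|h]; [exact h|]. exfalso; apply Hq0; apply Hzero; auto. }
      assert (Hsm : forall q, In q l -> d q0 p < (1 - c) * d q p).
      { intros q Hq; specialize (He' q Hq); simpl in He'; lra. }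
      assert (Hfar : forall q, In q l -> c * d q p < d q0 q).
      { intros q Hq. specialize (Hsm q Hq). pose proof (Htri q q0 p).
        rewrite (Hsym q q0) in H. nra. }
      exists (q0 :: l); repeat split.
      + simpl; rewrite Hlen; reflexivity.
      + constructor; [|exact Hnd]. intro Hin. specialize (Hsm q0 Hin).
        pose proof (Hpos q0 p); nra.
      + intros q [<-|Hq]; [exact Hq0| apply Hnp; exact Hq].
      + intros q q' [<-|Hq] [<-|Hq'] Hne.
        * congruence.
        * apply Hfar; exact Hq'.
        * specialize (Hsm q Hq). specialize (Hfar q Hq). rewrite (Hsym q q0). nra.
        * apply Hsep; assumption. }
  set (mk := fun q : M => (q, c * d q p)).
  assert (Hbes : forall l : list M, NoDup l -> (forall q, In q l -> q <> p) ->
            (forall q q', In q l -> In q' l -> q <> q' -> c * d q' p < d q q') ->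
            besicovitch_family dbar (map mk l) /\
            (forall q q', In q l -> In q' l -> q <> q' -> ~ in_ball dbar (mk q') q) /\
            (forall B, In B (map mk l) -> in_ball dbar B p)).
  { intros l Hnd Hnp Hsep.
    assert (Hrp : forall q, In q l -> 0 < d q p).
    { intros q Hq; destruct (Hpos q p) as [h|h]; [exact h|]. exfalso; apply (Hnp q Hq); apply Hzero; auto. }
    assert (Hs : forall q q', In q l -> In q' l -> q <> q' -> ~ in_ball dbar (mk q') q).
    { intros q q' Hq Hq' Hne. unfold in_ball, mk, dbar; simpl. apply Rlt_not_le.
      apply Rmin_glb_lt; [apply Hsep; assumption|]. specialize (Hrp q Hq). nra. }
    assert (Hp : forall B, In B (map mk l) -> in_ball dbar B p).
    { intros B HB. apply in_map_iff in HB. destruct HB as [q [<- Hq]].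
      unfold in_ball, mk, dbar; simpl. rewrite Hdd, Rplus_0_l, (Hsym p q). apply Rmin_r. }
    split; [|split; assumption].
    split; [|split; [|split]].
    - apply FinFun.Injective_map_NoDup; [|exact Hnd].
      intros a b E; unfold mk in E; injection E; auto.
    - intros B HB; apply in_map_iff in HB. destruct HB as [q [<- Hq]].
      unfold mk; simpl. specialize (Hrp q Hq); nra.
    - intros B B' HB HB' Hne. apply in_map_iff in HB, HB'.
      destruct HB as [q [<- Hq]]; destruct HB' as [q' [<- Hq']].
      apply Hs; auto. intro E; subst; apply Hne; reflexivity.
    - exists p; exact Hp. }
  exists dbar; split; [exact Hmet|]; split; [exact Hbnd|]; split.
  - intros [N [HN HF]]. destruct (Hfam (S N)) as [l [Hlen [Hnd [Hnp Hsep]]]].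
    destruct (Hbes l Hnd Hnp Hsep) as [Hb _].
    specialize (HF _ Hb). rewrite length_map, Hlen in HF. lia.
  - intros [N [HN HF]]. destruct (Hfam (S N)) as [l [Hlen [Hnd [Hnp Hsep]]]].
    destruct (Hbes l Hnd Hnp Hsep) as [Hb [Hs Hp]].
    destruct (fin_max (fun q => dbar q p) l) as [R0 HR0].
    destruct (HF (fun a => In a l) (fun B => In B (map mk l))) as [Sub [HS1 [HS2 HS3]]].
    + exists p, R0; exact HR0.
    + destruct Hb as [_ [Hb _]]; exact Hb.
    + intros a Ha; exists (c * d a p). apply in_map_iff; exists a; split; [reflexivity|exact Ha].
    + assert (HSall : forall B, In B (map mk l) -> Sub B).
      { intros B HB. apply in_map_iff in HB; destruct HB as [q [<- Hq]].
        destruct (HS2 q Hq) as [B' [HB' Hin]].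
        pose proof (HS1 B' HB') as HB'F. apply in_map_iff in HB'F.
        destruct HB'F as [q' [Eq Hq']]. subst B'.
        destruct (classic (q = q')) as [E|E].
        - subst; exact HB'.
        - exfalso; exact (Hs q q' Hq Hq' E Hin). }
      specialize (HS3 p (map mk l)). destruct Hb as [Hnd' _].
      assert (length (map mk l) <= N)%nat.
      { apply HS3; [exact Hnd'|]. intros B HB; split; [apply HSall; exact HB| apply Hp; exact HB]. }
      rewrite length_map, Hlen in H. lia.
Qed.
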